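(* Let $(G,\cdot,D,\star)$ be an invariant probabilistic metric group with identity $e$, where $\star$ is a continuous triangle function. Then $\Pi(G)$ is closed under $\odot$ and $(\Pi(G),\odot,\mathbb D,\star)$ is a complete invariant probabilistic metric group with identity element $\delta_e$.
   Context: A distribution function is a nondecreasing, left-continuous function $F:[-\infty,+\infty]\to[0,1]$ with $F(-\infty)=0$, $F(+\infty)=1$; $\Delta^+$ is the set of distribution functions with $F(0)=0$, ordered pointwise (a complete lattice with maximum $\mathcal H_0$, $\mathcal H_0(t)=0$ for $t\le0$, $1$ for $t>0$). A triangle function is a binary operation $\star$ on $\Delta^+$ that is commutative, associative, nondecreasing in each argument, with $F\star\mathcal H_0=F$. $F_n\xrightarrow{w}F$ means $F_n(t)\to F(t)$ at every continuity point $t\in\mathbb R$ of $F$; $\star$ is continuous if $F_n\star L_n\xrightarrow{w}F\star L$ whenever $F_n\xrightarrow{w}F$, $L_n\xrightarrow{w}L$. A probabilistic metric space $(G,D,\star)$ consists of a set $G$, a triangle function $\star$ and $D:G\times G\to\Delta^+$ with (i) $D(p,q)=\mathcal H_0$ iff $p=q$; (ii) $D(p,q)=D(q,p)$; (iii) $D(p,q)\star D(q,r)\le D(p,r)$. If $(G,\cdot)$ is a group and $D(pr,qr)=D(rp,rq)=D(p,q)$ for all $p,q,r$, it is an invariant probabilistic metric group. A sequence $(z_n)$ is Cauchy if $D(z_n,z_p)\xrightarrow{w}\mathcal H_0$ as $n,p\to\infty$; completeness means every Cauchy sequence has a point $z$ with $D(z_n,z)\xrightarrow{w}\mathcal H_0$.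 A map $f:G\to\Delta^+$ is probabilistic $1$-Lipschitz if $D(x,y)\star f(y)\le f(x)$ for all $x,y$. $\delta_a(y)=D(y,a)$. $\Pi(G)$ is the set of probabilistic $1$-Lipschitz maps $f$ for which there is a Cauchy sequence $(a_n)\subset G$ with $D(a_n,x)\xrightarrow{w}f(x)$ for all $x$. $\mathbb D(f,g)=\sup_{x\in G}f(x)\star g(x)$ for $f,g\in\Pi(G)$. For maps $f,g:G\to\Delta^+$, $(f\odot g)(x)=\sup_{y,z\in G,\ yz=x}f(y)\star g(z)$. *)

(* Defs.v *)
From Stdlib Require Import Reals ClassicalEpsilon.
Open Scope R_scope.

(** * Distribution functions and Delta^+
    A distribution function F : [-oo,+oo] -> [0,1] has the fixed values
    F(-oo)=0, F(+oo)=1, so it is represented by its restriction to R. *)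

Definition nondecr (F : R -> R) : Prop := forall s t, s <= t -> F s <= F t.

Definition left_cont (F : R -> R) : Prop :=
  forall t eps, 0 < eps -> exists delta, 0 < delta /\
    forall s, t - delta < s < t -> Rabs (F s - F t) < eps.

Definition Dplus (F : R -> R) : Prop :=
  nondecr F /\ left_cont F /\ (forall t, 0 <= F t <= 1) /\ F 0 = 0.

Definition Dle (F G : R -> R) : Prop := forall t, F t <= G t.

Definition H0 (t : R) : R := if Rle_dec t 0 then 0 else 1.

Definition is_Dsup (S : (R -> R) -> Prop) (F : R -> R) : Prop :=
  Dplus F /\ (forall H, S H -> Dle H F) /\
  (forall F', Dplus F' -> (forall H, S H -> Dle H F') -> Dle F F').

Definition DSup (S : (R -> R) -> Prop) : R -> R :=
  epsilon (inhabits H0) (is_Dsup S).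

Definition is_triangle_function (star : (R -> R) -> (R -> R) -> (R -> R)) : Prop :=
  (forall F L, Dplus F -> Dplus L -> Dplus (star F L)) /\
  (forall F L, Dplus F -> Dplus L -> star F L = star L F) /\
  (forall F L M, Dplus F -> Dplus L -> Dplus M ->
     star F (star L M) = star (star F L) M) /\
  (forall F F' L, Dplus F -> Dplus F' -> Dplus L -> Dle F F' ->
     Dle (star F L) (star F' L)) /\
  (forall F, Dplus F -> star F H0 = F).

Definition wconv (Fn : nat -> R -> R) (F : R -> R) : Prop :=
  forall t, continuity_pt F t -> Un_cv (fun n => Fn n t) (F t).

Definition wconv2 (Fnp : nat -> nat -> R -> R) (F : R -> R) : Prop :=
  forall t, continuity_pt F t -> forall eps, 0 < eps ->
    exists N, forall n p, (n >= N)%nat -> (p >= N)%nat ->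
      Rabs (Fnp n p t - F t) < eps.

Definition continuous_tf (star : (R -> R) -> (R -> R) -> (R -> R)) : Prop :=
  forall (Fn Ln : nat -> R -> R) F L,
    (forall n, Dplus (Fn n)) -> (forall n, Dplus (Ln n)) -> Dplus F -> Dplus L ->
    wconv Fn F -> wconv Ln L -> wconv (fun n => star (Fn n) (Ln n)) (star F L).

Definition is_group_on {T : Type} (P : T -> Prop) (mul : T -> T -> T) (e : T) : Prop :=
  P e /\
  (forall x y, P x -> P y -> P (mul x y)) /\
  (forall x y z, P x -> P y -> P z -> mul x (mul y z) = mul (mul x y) z) /\
  (forall x, P x -> mul e x = x /\ mul x e = x) /\
  (forall x, P x -> exists y, P y /\ mul x y = e /\ mul y x = e).

Definition is_PM_on {T : Type} (P : T -> Prop)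
  (star : (R -> R) -> (R -> R) -> (R -> R)) (D : T -> T -> R -> R) : Prop :=
  (forall p q, P p -> P q -> Dplus (D p q)) /\
  (forall p q, P p -> P q -> (D p q = H0 <-> p = q)) /\
  (forall p q, P p -> P q -> D p q = D q p) /\
  (forall p q r, P p -> P q -> P r -> Dle (star (D p q) (D q r)) (D p r)).

Definition is_invariant_on {T : Type} (P : T -> Prop) (mul : T -> T -> T)
  (D : T -> T -> R -> R) : Prop :=
  forall p q r, P p -> P q -> P r ->
    D (mul p r) (mul q r) = D p q /\ D (mul r p) (mul r q) = D p q.

Definition is_Cauchy {T : Type} (D : T -> T -> R -> R) (z : nat -> T) : Prop :=
  wconv2 (fun n p => D (z n) (z p)) H0.

Definition is_complete_on {T : Type} (P : T -> Prop) (D : T -> T -> R -> R) : Prop :=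
  forall z : nat -> T, (forall n, P (z n)) -> is_Cauchy D z ->
    exists z0, P z0 /\ wconv (fun n => D (z n) z0) H0.

Definition is_PLip1 {G : Type} (D : G -> G -> R -> R)
  (star : (R -> R) -> (R -> R) -> (R -> R)) (f : G -> R -> R) : Prop :=
  (forall x, Dplus (f x)) /\ (forall x y, Dle (star (D x y) (f y)) (f x)).

Definition Pi {G : Type} (D : G -> G -> R -> R)
  (star : (R -> R) -> (R -> R) -> (R -> R)) (f : G -> R -> R) : Prop :=
  is_PLip1 D star f /\
  exists a : nat -> G, is_Cauchy D a /\ forall x, wconv (fun n => D (a n) x) (f x).

Definition bbD {G : Type} (star : (R -> R) -> (R -> R) -> (R -> R))
  (f g : G -> R -> R) : R -> R :=
  DSup (fun H => exists x, H = star (f x) (g x)).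

Definition odot {G : Type} (mul : G -> G -> G)
  (star : (R -> R) -> (R -> R) -> (R -> R)) (f g : G -> R -> R) : G -> R -> R :=
  fun x => DSup (fun H => exists y z, mul y z = x /\ H = star (f y) (g z)).

Definition delta {G : Type} (D : G -> G -> R -> R) (a : G) : G -> R -> R :=
  fun y => D y a.

(* Main.v *)
Require Import Defs.
From Stdlib Require Import Reals ClassicalEpsilon Lra Lia Classical FunctionalExtensionality.
Open Scope R_scope.

Definition ev (P : nat -> Prop) := exists N, forall n, (n >= N)%nat -> P n.
Definition freq (P : nat -> Prop) := forall N, exists n, (n >= N)%nat /\ P n.

Lemma ev_and (P Q : nat -> Prop) : ev P -> ev Q -> ev (fun n => P n /\ Q n).
Proof. intros [N1 H1] [N2 H2]. exists (max N1 N2). intros n Hn. split; [apply H1|apply H2]; lia. Qed.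

Lemma ev_imp (P Q : nat -> Prop) : ev P -> (forall n, P n -> Q n) -> ev Q.
Proof. intros [N H] HPQ. exists N. intros n Hn; auto. Qed.

Lemma not_ev_freq (P : nat -> Prop) : ~ ev P -> freq (fun n => ~ P n).
Proof.
  intros H N. apply NNPP. intro H'. apply H. exists N. intros n Hn.
  apply NNPP. intro Hp. apply H'. exists n; auto.
Qed.

Lemma freq_seq (P : nat -> Prop) : freq P ->
  exists nn : nat -> nat, forall j, (nn j >= j)%nat /\ P (nn j).
Proof.
  intros H. exists (fun j => epsilon (inhabits 0%nat) (fun n => (n >= j)%nat /\ P n)).
  intro j. exact (epsilon_spec (inhabits 0%nat) (fun n => (n >= j)%nat /\ P n) (H j)).
Qed.

Lemma ev_freq (P Q : nat -> Prop) : ev P -> freq Q -> exists n, P n /\ Q n.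
Proof. intros [N H] HQ. destruct (HQ N) as [n [Hn Hq]]. exists n; auto. Qed.

Lemma Dp_nd F : Dplus F -> nondecr F.
Proof. intros [H _]; exact H. Qed.
Lemma Dp_lc F : Dplus F -> left_cont F.
Proof. intros [_ [H _]]; exact H. Qed.
Lemma Dp_b F t : Dplus F -> 0 <= F t <= 1.
Proof. intros [_ [_ [H _]]]; apply H. Qed.
Lemma Dp_neg F t : Dplus F -> t <= 0 -> F t = 0.
Proof.
  intros HF Ht. pose proof (Dp_nd F HF t 0 Ht). destruct HF as [_ [_ [Hb H0']]].
  specialize (Hb t). lra.
Qed.

Lemma Dle_antisym F L : Dle F L -> Dle L F -> F = L.
Proof. intros H1 H2. apply functional_extensionality. intro t. specialize (H1 t); specialize (H2 t); lra. Qed.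

Lemma Dle_refl F : Dle F F.
Proof. intro t; lra. Qed.

Lemma Dle_trans F L M : Dle F L -> Dle L M -> Dle F M.
Proof. intros H1 H2 t. specialize (H1 t); specialize (H2 t); lra. Qed.

Lemma H0_Dplus : Dplus H0.
Proof.
  unfold H0. split; [|split; [|split]].
  - intros s t Hst. destruct (Rle_dec s 0); destruct (Rle_dec t 0); lra.
  - intros t eps He. destruct (Rle_dec t 0).
    + exists 1. split; [lra|]. intros s Hs. destruct (Rle_dec s 0); [|lra].
      rewrite Rminus_diag, Rabs_R0; lra.
    + exists t. split; [lra|]. intros s Hs. destruct (Rle_dec s 0); [lra|].
      rewrite Rminus_diag, Rabs_R0; lra.
  - intro t. destruct (Rle_dec t 0); lra.
  - destruct (Rle_dec 0 0); lra.
Qed.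

Lemma le_H0 F : Dplus F -> Dle F H0.
Proof.
  intros HF t. unfold H0. destruct (Rle_dec t 0).
  - rewrite (Dp_neg F t HF r); lra.
  - apply (Dp_b F t HF).
Qed.

Lemma lc_le F t c : left_cont F -> (forall s, s < t -> F s <= c) -> F t <= c.
Proof.
  intros Hlc H. destruct (Rle_dec (F t) c) as [|Hn]; auto. exfalso.
  destruct (Hlc t (F t - c)) as [d [Hd Hs]]; [lra|].
  specialize (Hs (t - d/2)). assert (Hr : t - d < t - d/2 < t) by lra.
  specialize (Hs Hr). apply Rabs_def2 in Hs. specialize (H (t - d/2)). lra.
Qed.

(* weak convergence, characterization without continuity points *)
Definition wc (u : nat -> R -> R) (F : R -> R) : Prop :=
  (forall t eps, 0 < eps -> ev (fun n => F t - eps < u n t)) /\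
  (forall s t eps, s < t -> 0 < eps -> ev (fun n => u n s < F t + eps)).

Lemma wc_le u v F L : Dplus F -> wc u F -> wc v L -> ev (fun n => Dle (u n) (v n)) -> Dle F L.
Proof.
  intros HF [Ha _] [_ Hb] Hev t. apply lc_le; [apply Dp_lc; auto|].
  intros s Hs. apply Rnot_lt_le; intro Hlt.
  set (eps := (F s - L t)/3).
  assert (He : 0 < eps) by (unfold eps; lra).
  destruct (ev_and _ _ (ev_and _ _ (Ha s eps He) (Hb s t eps Hs He)) Hev) as [N HN].
  specialize (HN N (le_n _)). destruct HN as [[H1 H2] H3]. specialize (H3 s).
  unfold eps in *. lra.
Qed.

Lemma ev_true : ev (fun _ => True).
Proof. exists 0%nat; auto. Qed.

Lemma ev_all (P : nat -> Prop) : (forall n, P n) -> ev P.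
Proof. intros H; exists 0%nat; auto. Qed.

Lemma wc_unique u F L : Dplus F -> Dplus L -> wc u F -> wc u L -> F = L.
Proof.
  intros HF HL H1 H2. apply Dle_antisym.
  - apply (wc_le u u F L HF H1 H2). apply ev_all; intro; apply Dle_refl.
  - apply (wc_le u u L F HL H2 H1). apply ev_all; intro; apply Dle_refl.
Qed.

Lemma wc_const F : Dplus F -> wc (fun _ => F) F.
Proof.
  intros HF. split.
  - intros t eps He. apply ev_all; intros; lra.
  - intros s t eps Hst He. apply ev_all; intros. pose proof (Dp_nd F HF s t). lra.
Qed.

Lemma wc_ext u v F : (forall n, u n = v n) -> wc u F -> wc v F.
Proof.
  intros H Hw. replace v with u; auto. apply functional_extensionality; auto.
Qed.

Definition hc (u : nat -> R -> R) :=
  forall t eps, 0 < t -> 0 < eps -> ev (fun n => 1 - eps < u n t).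

Lemma hc_wc u : (forall n, Dplus (u n)) -> hc u -> wc u H0.
Proof.
  intros Hu Hh. split.
  - intros t eps He. unfold H0. destruct (Rle_dec t 0).
    + apply ev_all; intro n. pose proof (Dp_b _ t (Hu n)); lra.
    + apply (ev_imp _ _ (Hh t eps ltac:(lra) He)). intros; lra.
  - intros s t eps Hst He. apply ev_all; intro n. unfold H0. destruct (Rle_dec t 0).
    + rewrite (Dp_neg _ s (Hu n)); lra.
    + pose proof (Dp_b _ s (Hu n)); lra.
Qed.

Lemma wc_hc u : wc u H0 -> hc u.
Proof.
  intros [Ha _] t eps Ht He. apply (ev_imp _ _ (Ha t eps He)). intros n. unfold H0.
  destruct (Rle_dec t 0); lra.
Qed.

Lemma hc_ge u v : hc u -> (forall n, Dle (u n) (v n)) -> hc v.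
Proof.
  intros Hh Hle t eps Ht He. apply (ev_imp _ _ (Hh t eps Ht He)). intros n Hn.
  specialize (Hle n t); lra.
Qed.

Lemma hc_sub u nn : hc u -> (forall j, (nn j >= j)%nat) -> hc (fun j => u (nn j)).
Proof.
  intros Hh Hn t eps Ht He. destruct (Hh t eps Ht He) as [N HN]. exists N.
  intros j Hj. apply HN. specialize (Hn j); lia.
Qed.

Lemma hc_H0 : hc (fun _ => H0).
Proof. intros t eps Ht He. apply ev_all; intro. unfold H0. destruct (Rle_dec t 0); lra. Qed.

Lemma cont_eps f t : continuity_pt f t -> forall eps, 0 < eps ->
  exists d, 0 < d /\ forall y, Rabs (y - t) < d -> Rabs (f y - f t) < eps.
Proof.
  intros Hc eps He. destruct (Hc eps He) as [d [Hd H]]. exists d; split; auto.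
  intros y Hy. destruct (Req_dec y t) as [->|Hne].
  - rewrite Rminus_diag, Rabs_R0; auto.
  - apply (H y). split; [split; [exact I| auto]|]. simpl. unfold R_dist. exact Hy.
Qed.

Lemma eps_cont f t : (forall eps, 0 < eps ->
  exists d, 0 < d /\ forall y, Rabs (y - t) < d -> Rabs (f y - f t) < eps) -> continuity_pt f t.
Proof.
  intros H eps He. destruct (H eps He) as [d [Hd Hy]]. exists d; split; auto.
  intros y [_ Hyd]. simpl in *. unfold R_dist in *. auto.
Qed.

Lemma H0_cont t : t <> 0 -> continuity_pt H0 t.
Proof.
  intros Ht. apply eps_cont. intros eps He. exists (Rabs t). split; [apply Rabs_pos_lt; auto|].
  intros y Hy. unfold H0. unfold Rabs in *.
  destruct (Rcase_abs t); destruct (Rcase_abs (y - t)); destruct (Rle_dec y 0); destruct (Rle_dec t 0);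
    try lra; rewrite Rminus_diag; destruct (Rcase_abs 0); lra.
Qed.

Lemma wc_wconv u F : (forall n, Dplus (u n)) -> Dplus F -> wc u F -> wconv u F.
Proof.
  intros Hu HF [Ha Hb] t Hc eps He.
  destruct (cont_eps _ _ Hc (eps/2)) as [d [Hd Hdd]]; [lra|].
  destruct (ev_and _ _ (Ha t eps He) (Hb t (t + d/2) (eps/2) ltac:(lra) ltac:(lra))) as [N HN].
  exists N. intros n Hn. specialize (HN n Hn). unfold R_dist.
  specialize (Hdd (t + d/2)). assert (Rabs (t + d/2 - t) < d).
  { replace (t + d/2 - t) with (d/2) by ring. rewrite Rabs_right; lra. }
  specialize (Hdd H). apply Rabs_def2 in Hdd. apply Rabs_def1; lra.
Qed.

Fixpoint itv (F : R -> R) (a b : R) (k : nat) : R * R :=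
  match k with
  | O => (a, b)
  | S k => let (x, y) := itv F a b k in
           let h := (y - x) / 4 in
           if Rle_dec (F (x + 2*h) - F (x + h)) (F (x + 3*h) - F (x + 2*h))
           then (x + h, x + 2*h) else (x + 2*h, x + 3*h)
  end.

Lemma itv_step F a b k : nondecr F ->
  fst (itv F a b k) < snd (itv F a b k) ->
  fst (itv F a b k) < fst (itv F a b (S k)) /\
  fst (itv F a b (S k)) < snd (itv F a b (S k)) /\
  snd (itv F a b (S k)) < snd (itv F a b k) /\
  F (snd (itv F a b (S k))) - F (fst (itv F a b (S k)))
    <= (F (snd (itv F a b k)) - F (fst (itv F a b k))) / 2.
Proof.
  intros Hnd. simpl. destruct (itv F a b k) as [x y]. simpl. intros Hxy.
  set (h := (y - x)/4).
  assert (Hh : 0 < h) by (unfold h; lra).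
  pose proof (Hnd x (x + h) ltac:(lra)).
  pose proof (Hnd (x + 3*h) y ltac:(unfold h; lra)).
  pose proof (Hnd (x + h) (x + 2*h) ltac:(lra)).
  pose proof (Hnd (x + 2*h) (x + 3*h) ltac:(lra)).
  destruct (Rle_dec _ _); simpl; repeat split; try lra; unfold h; lra.
Qed.

Lemma itv_inv F a b k : nondecr F -> a < b ->
  fst (itv F a b k) < snd (itv F a b k) /\
  F (snd (itv F a b k)) - F (fst (itv F a b k)) <= (F b - F a) * (/2) ^ k.
Proof.
  intros Hnd Hab. induction k as [|k [IH1 IH2]].
  - simpl. lra.
  - destruct (itv_step F a b k Hnd IH1) as [_ [H2 [_ H4]]]. split; auto.
    simpl pow. lra.
Qed.

Lemma itv_mono F a b k m : nondecr F -> a < b -> (k <= m)%nat ->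
  fst (itv F a b k) <= fst (itv F a b m) /\ snd (itv F a b m) <= snd (itv F a b k).
Proof.
  intros Hnd Hab Hkm. induction Hkm as [|m Hkm IH]; [lra|].
  destruct (itv_step F a b m Hnd (proj1 (itv_inv F a b m Hnd Hab))) as [H1 [H2 [H3 _]]].
  lra.
Qed.

Lemma itv_lt F a b k m : nondecr F -> a < b -> fst (itv F a b k) < snd (itv F a b m).
Proof.
  intros Hnd Hab. destruct (itv_mono F a b k (max k m) Hnd Hab ltac:(lia)) as [H1 _].
  destruct (itv_mono F a b m (max k m) Hnd Hab ltac:(lia)) as [_ H2].
  pose proof (proj1 (itv_inv F a b (max k m) Hnd Hab)). lra.
Qed.

Lemma dense_cont F a b : nondecr F -> (forall t, 0 <= F t <= 1) -> a < b ->
  exists r, a < r < b /\ continuity_pt F r.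
Proof.
  intros Hnd Hb Hab.
  set (E := fun z => exists k, z = fst (itv F a b k)).
  assert (HE : bound E).
  { exists b. intros z [k ->]. pose proof (itv_lt F a b k O Hnd Hab). simpl in H. lra. }
  assert (HE2 : exists z, E z) by (exists a; exists O; reflexivity).
  destruct (completeness E HE HE2) as [r [Hub Hlub]].
  assert (Hxr : forall k, fst (itv F a b k) < r).
  { intro k. destruct (itv_step F a b k Hnd (proj1 (itv_inv F a b k Hnd Hab))) as [H1 _].
    assert (fst (itv F a b (S k)) <= r) by (apply Hub; exists (S k); reflexivity). lra. }
  assert (Hry : forall k, r < snd (itv F a b k)).
  { intro k. destruct (itv_step F a b k Hnd (proj1 (itv_inv F a b k Hnd Hab))) as [_ [_ [H3 _]]].
    assert (r <= snd (itv F a b (S k))).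
    { apply Hlub. intros z [j ->]. left. apply itv_lt; auto. }
    lra. }
  exists r. split; [split|].
  - specialize (Hxr O). simpl in Hxr. lra.
  - specialize (Hry O). simpl in Hry. lra.
  - apply eps_cont. intros eps He.
    destruct (pow_lt_1_zero (/2) ltac:(rewrite Rabs_right; lra) eps He) as [k Hk].
    specialize (Hk k (le_n _)). rewrite Rabs_right in Hk by (apply Rle_ge, pow_le; lra).
    destruct (itv_inv F a b k Hnd Hab) as [_ Hosc].
    pose proof (Hb a); pose proof (Hb b).
    assert (Hosc' : F (snd (itv F a b k)) - F (fst (itv F a b k)) < eps).
    { assert ((F b - F a) * (/2)^k <= (/2)^k).
      { rewrite <- (Rmult_1_l ((/2)^k)) at 2. apply Rmult_le_compat_r; [apply pow_le; lra|lra]. }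
      lra. }
    specialize (Hxr k); specialize (Hry k).
    exists (Rmin (r - fst (itv F a b k)) (snd (itv F a b k) - r)). split.
    + apply Rmin_glb_lt; lra.
    + intros y Hy. pose proof (Rmin_l (r - fst (itv F a b k)) (snd (itv F a b k) - r)).
      pose proof (Rmin_r (r - fst (itv F a b k)) (snd (itv F a b k) - r)).
      apply Rabs_def2 in Hy. destruct Hy as [Hy1 Hy2].
      pose proof (Hnd (fst (itv F a b k)) y ltac:(lra)).
      pose proof (Hnd y (snd (itv F a b k)) ltac:(lra)).
      pose proof (Hnd (fst (itv F a b k)) r ltac:(lra)).
      pose proof (Hnd r (snd (itv F a b k)) ltac:(lra)).
      apply Rabs_def1; lra.
Qed.

Lemma wconv_wc u F : (forall n, Dplus (u n)) -> Dplus F -> wconv u F -> wc u F.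
Proof.
  intros Hu HF Hw. split.
  - intros t eps He. destruct (Dp_lc F HF t (eps/2)) as [d [Hd Hdd]]; [lra|].
    destruct (dense_cont F (t - d) t (Dp_nd F HF) (fun s => Dp_b F s HF) ltac:(lra)) as [r [Hr Hc]].
    destruct (Hw r Hc (eps/2)) as [N HN]; [lra|]. exists N. intros n Hn.
    specialize (HN n Hn). unfold R_dist in HN. apply Rabs_def2 in HN.
    specialize (Hdd r Hr). apply Rabs_def2 in Hdd.
    pose proof (Dp_nd _ (Hu n) r t ltac:(lra)). lra.
  - intros s t eps Hst He.
    destruct (dense_cont F s t (Dp_nd F HF) (fun s => Dp_b F s HF) Hst) as [r [Hr Hc]].
    destruct (Hw r Hc eps He) as [N HN]. exists N. intros n Hn.
    specialize (HN n Hn). unfold R_dist in HN. apply Rabs_def2 in HN.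
    pose proof (Dp_nd _ (Hu n) s r ltac:(lra)). pose proof (Dp_nd F HF r t ltac:(lra)). lra.
Qed.

Lemma lub_approx E m eps : is_lub E m -> 0 < eps -> exists c, E c /\ m - eps < c.
Proof.
  intros [Hub Hl] He. apply NNPP. intro H.
  assert (is_upper_bound E (m - eps)).
  { intros z Hz. apply Rnot_lt_le. intro Hlt. apply H. exists z; auto. }
  specialize (Hl _ H0). lra.
Qed.

Definition Qp (u : nat -> R -> R) := forall s t c eps, s < t -> 0 < eps ->
  freq (fun n => c < u n s) -> ev (fun n => c - eps < u n t).

Lemma crit u : (forall n, Dplus (u n)) -> Qp u -> exists F, Dplus F /\ wc u F.
Proof.
  intros Hu HQ.
  set (S := fun t c => c <= 0 \/ exists r, r < t /\ ev (fun n => c < u n r)).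
  assert (HS : forall t, {m | is_lub (S t) m}).
  { intro t. apply completeness.
    - exists 1. intros c [Hc|[r [Hr [N HN]]]]; [lra|].
      specialize (HN N (le_n _)). pose proof (Dp_b _ r (Hu N)). lra.
    - exists 0. left; lra. }
  set (F := fun t => proj1_sig (HS t)).
  assert (HF : forall t, is_lub (S t) (F t)) by (intro t; unfold F; destruct (HS t); auto).
  assert (HF0 : forall t, 0 <= F t) by (intro t; apply (proj1 (HF t)); left; lra).
  assert (HF1 : forall t, F t <= 1).
  { intro t. apply (proj2 (HF t)). intros c [Hc|[r [Hr [N HN]]]]; [lra|].
    specialize (HN N (le_n _)). pose proof (Dp_b _ r (Hu N)). lra. }
  assert (Hmono : forall s t, s <= t -> F s <= F t).
  { intros s t Hst. apply (proj2 (HF s)). intros c Hc. apply (proj1 (HF t)).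
    destruct Hc as [Hc|[r [Hr Hev]]]; [left; auto|right; exists r; split; auto; lra]. }
  exists F. split; [split; [|split; [|split]]|split].
  - exact Hmono.
  - intros t eps He. destruct (lub_approx _ _ (eps/2) (HF t) ltac:(lra)) as [c [Hc Hcl]].
    destruct Hc as [Hc|[r [Hr Hev]]].
    + exists 1. split; [lra|]. intros s Hs. pose proof (HF0 s). pose proof (Hmono s t ltac:(lra)).
      apply Rabs_def1; lra.
    + exists (t - r). split; [lra|]. intros s Hs.
      assert (c <= F s) by (apply (proj1 (HF s)); right; exists r; split; [lra|auto]).
      pose proof (Hmono s t ltac:(lra)). apply Rabs_def1; lra.
  - intro t; split; auto.
  - apply Rle_antisym; [|apply HF0]. apply (proj2 (HF 0)).
    intros c [Hc|[r [Hr [N HN]]]]; [lra|]. specialize (HN N (le_n _)).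
    rewrite (Dp_neg _ r (Hu N)) in HN by lra. lra.
  - intros t eps He. destruct (lub_approx _ _ eps (HF t) He) as [c [Hc Hcl]].
    destruct Hc as [Hc|[r [Hr Hev]]].
    + apply ev_all. intro n. pose proof (Dp_b _ t (Hu n)). lra.
    + apply (ev_imp _ _ Hev). intros n Hn. pose proof (Dp_nd _ (Hu n) r t ltac:(lra)). lra.
  - intros s t eps Hst He. apply NNPP. intro Hn. apply not_ev_freq in Hn.
    assert (Hfr : freq (fun n => F t + eps/2 < u n s)).
    { intro N. destruct (Hn N) as [n [Hn1 Hn2]]. exists n. split; auto. lra. }
    specialize (HQ s ((s+t)/2) (F t + eps/2) (eps/4) ltac:(lra) ltac:(lra) Hfr).
    assert (S t (F t + eps/8)).
    { right. exists ((s+t)/2). split; [lra|]. apply (ev_imp _ _ HQ). intros; lra. }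
    pose proof (proj1 (HF t) _ H). lra.
Qed.

Section Star.
Variable star : (R -> R) -> (R -> R) -> (R -> R).
Hypothesis Htri : is_triangle_function star.
Hypothesis Hcont : continuous_tf star.

Lemma st_Dp F L : Dplus F -> Dplus L -> Dplus (star F L).
Proof. destruct Htri as [H _]; auto. Qed.
Lemma st_comm F L : Dplus F -> Dplus L -> star F L = star L F.
Proof. destruct Htri as [_ [H _]]; auto. Qed.
Lemma st_assoc F L M : Dplus F -> Dplus L -> Dplus M -> star F (star L M) = star (star F L) M.
Proof. destruct Htri as [_ [_ [H _]]]; auto. Qed.
Lemma st_mono_l F F' L : Dplus F -> Dplus F' -> Dplus L -> Dle F F' -> Dle (star F L) (star F' L).
Proof. destruct Htri as [_ [_ [_ [H _]]]]; auto. Qed.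
Lemma st_H0 F : Dplus F -> star F H0 = F.
Proof. destruct Htri as [_ [_ [_ [_ H]]]]; auto. Qed.
Lemma st_mono_r F L L' : Dplus F -> Dplus L -> Dplus L' -> Dle L L' -> Dle (star F L) (star F L').
Proof.
  intros. rewrite (st_comm F L), (st_comm F L'); auto. apply st_mono_l; auto.
Qed.
Lemma st_H0l F : Dplus F -> star H0 F = F.
Proof. intros. rewrite st_comm; auto using H0_Dplus. apply st_H0; auto. Qed.
Lemma st_le_l F L : Dplus F -> Dplus L -> Dle (star F L) F.
Proof.
  intros HF HL. rewrite <- (st_H0 F) at 2; auto. apply st_mono_r; auto using H0_Dplus, le_H0.
Qed.
Lemma st_mono2 F F' L L' : Dplus F -> Dplus F' -> Dplus L -> Dplus L' ->
  Dle F F' -> Dle L L' -> Dle (star F L) (star F' L').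
Proof.
  intros. apply Dle_trans with (star F' L). apply st_mono_l; auto. apply st_mono_r; auto.
Qed.

Lemma star_wc u v F L : (forall n, Dplus (u n)) -> (forall n, Dplus (v n)) -> Dplus F -> Dplus L ->
  wc u F -> wc v L -> wc (fun n => star (u n) (v n)) (star F L).
Proof.
  intros Hu Hv HF HL H1 H2. apply wconv_wc; auto using st_Dp.
  apply Hcont; auto; apply wc_wconv; auto.
Qed.

Lemma hc_star u v : (forall n, Dplus (u n)) -> (forall n, Dplus (v n)) -> hc u -> hc v ->
  hc (fun n => star (u n) (v n)).
Proof.
  intros Hu Hv H1 H2. apply wc_hc. rewrite <- (st_H0 H0) by apply H0_Dplus.
  apply star_wc; auto using H0_Dplus, hc_wc.
Qed.

Definition pairs (nn mm : nat -> nat) := forall j, (nn j >= j /\ mm j >= j)%nat.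

Lemma Q_of u : (forall n, Dplus (u n)) ->
  (forall nn mm, pairs nn mm -> exists H : nat -> R -> R, (forall j, Dplus (H j)) /\ hc H /\
     forall j, Dle (star (H j) (u (nn j))) (u (mm j))) -> Qp u.
Proof.
  intros Hu HP s t c eps Hst He Hfr. apply NNPP. intro Hn. apply not_ev_freq in Hn.
  destruct (freq_seq _ Hfr) as [nn Hnn]. destruct (freq_seq _ Hn) as [mm Hmm].
  destruct (HP nn mm) as [H [HD [Hh Hle]]].
  { intro j. split; [apply Hnn|apply Hmm]. }
  destruct (Rlt_dec c 0) as [Hc0|Hc0].
  { destruct (Hmm O) as [_ Hm]. pose proof (Dp_b _ t (Hu (mm O))). lra. }
  destruct (Rlt_dec c 1) as [Hc1|Hc1].
  2:{ destruct (Hnn O) as [_ Hm]. pose proof (Dp_b _ s (Hu (nn O))). lra. }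
  destruct (Rlt_dec s 0) as [Hs0|Hs0].
  { destruct (Hnn O) as [_ Hm]. rewrite (Dp_neg _ s (Hu (nn O))) in Hm by lra. lra. }
  set (Gc := fun r => if Rle_dec r s then 0 else c).
  assert (HG : Dplus Gc).
  { unfold Gc. split; [|split; [|split]].
    - intros a b Hab. destruct (Rle_dec a s); destruct (Rle_dec b s); lra.
    - intros a e' He'. destruct (Rle_dec a s).
      + exists 1. split; [lra|]. intros b Hb. destruct (Rle_dec b s); [|lra].
        rewrite Rminus_diag, Rabs_R0; lra.
      + exists (a - s). split; [lra|]. intros b Hb. destruct (Rle_dec b s); [lra|].
        rewrite Rminus_diag, Rabs_R0; lra.
    - intro a. destruct (Rle_dec a s); lra.
    - destruct (Rle_dec 0 s); lra. }
  assert (HGu : forall j, Dle Gc (u (nn j))).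
  { intros j r. unfold Gc. destruct (Rle_dec r s).
    - apply (Dp_b _ r (Hu _)).
    - destruct (Hnn j) as [_ Hj]. pose proof (Dp_nd _ (Hu (nn j)) s r ltac:(lra)). lra. }
  assert (Hw : wc (fun j => star (H j) Gc) (star H0 Gc)).
  { apply star_wc; auto using H0_Dplus, hc_wc. apply wc_const; auto. }
  rewrite st_H0l in Hw by auto.
  destruct Hw as [Ha _]. destruct (Ha t eps He) as [N HN].
  specialize (HN N (le_n _)). simpl in HN.
  assert (Hgt : Gc t = c) by (unfold Gc; destruct (Rle_dec t s); lra). rewrite Hgt in HN.
  pose proof (st_mono_r (H N) Gc (u (nn N)) (HD N) HG (Hu _) (HGu N) t).
  specialize (Hle N t). destruct (Hmm N) as [_ Hm]. lra.
Qed.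

End Star.

Definition CauP (K : nat -> nat -> R -> R) := forall t eps, 0 < t -> 0 < eps ->
  exists N, forall n m, (n >= N)%nat -> (m >= N)%nat -> 1 - eps < K n m t.

Lemma CauP_pairs K : CauP K -> forall nn mm, pairs nn mm -> hc (fun j => K (nn j) (mm j)).
Proof.
  intros HK nn mm Hp t eps Ht He. destruct (HK t eps Ht He) as [N HN]. exists N.
  intros j Hj. destruct (Hp j). apply HN; lia.
Qed.

Lemma pairs_CauP K : (forall nn mm, pairs nn mm -> hc (fun j => K (nn j) (mm j))) -> CauP K.
Proof.
  intros HP t eps Ht He. apply NNPP. intro Hn.
  set (P := fun j (p : nat * nat) => (fst p >= j)%nat /\ (snd p >= j)%nat /\ K (fst p) (snd p) t <= 1 - eps).
  assert (Hex : forall j, exists p, P j p).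
  { intro j. apply NNPP. intro Hn2. apply Hn. exists j. intros n m Hn' Hm'.
    apply Rnot_le_lt. intro Hle. apply Hn2. exists (n, m). unfold P; simpl; auto. }
  set (pp := fun j => epsilon (inhabits (0%nat, 0%nat)) (P j)).
  assert (Hpp : forall j, P j (pp j)) by (intro j; apply epsilon_spec; auto).
  destruct (HP (fun j => fst (pp j)) (fun j => snd (pp j))) with t eps as [N HN]; auto.
  { intro j; destruct (Hpp j) as [H1 [H2 _]]; auto. }
  specialize (HN N (le_n _)). destruct (Hpp N) as [_ [_ H3]]. simpl in HN. lra.
Qed.

Lemma wconv2_CauP K : wconv2 K H0 -> CauP K.
Proof.
  intros Hw t eps Ht He. destruct (Hw t (H0_cont t ltac:(lra)) eps He) as [N HN].
  exists N. intros n m Hn Hm. specialize (HN n m Hn Hm). unfold H0 in HN.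
  destruct (Rle_dec t 0) as [Hn0|Hn0]; [lra|]. apply Rabs_def2 in HN. lra.
Qed.

Lemma CauP_wconv2 K : (forall n m, Dplus (K n m)) -> CauP K -> wconv2 K H0.
Proof.
  intros HD HK t Hc eps He. destruct (Rle_dec t 0) as [r|r].
  - exists O. intros n m _ _. rewrite (Dp_neg _ t (HD n m) r). unfold H0.
    destruct (Rle_dec t 0); [|lra]. rewrite Rminus_diag, Rabs_R0; auto.
  - destruct (HK t eps ltac:(lra) He) as [N HN]. exists N. intros n m Hn Hm.
    specialize (HN n m Hn Hm). pose proof (Dp_b _ t (HD n m)). unfold H0.
    destruct (Rle_dec t 0) as [Hn0|Hn0]; [lra|]. apply Rabs_def1; lra.
Qed.

Section Grp.
Variable G : Type.
Variable mul : G -> G -> G.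
Variable e : G.
Variable D : G -> G -> R -> R.
Variable star : (R -> R) -> (R -> R) -> (R -> R).
Hypothesis Htri : is_triangle_function star.
Hypothesis Hcont : continuous_tf star.
Hypothesis Hgrp : is_group_on (fun _ : G => True) mul e.
Hypothesis Hpm : is_PM_on (fun _ : G => True) star D.
Hypothesis Hinv : is_invariant_on (fun _ : G => True) mul D.

Lemma DDp p q : Dplus (D p q).
Proof. destruct Hpm as [H _]; auto. Qed.
Lemma Dself p : D p p = H0.
Proof. destruct Hpm as [_ [H _]]. apply H; auto. Qed.
Lemma Dsym p q : D p q = D q p.
Proof. destruct Hpm as [_ [_ [H _]]]; auto. Qed.
Lemma Dtri p q r : Dle (star (D p q) (D q r)) (D p r).
Proof. destruct Hpm as [_ [_ [_ H]]]; auto. Qed.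
Lemma invR p q r : D (mul p r) (mul q r) = D p q.
Proof. apply (Hinv p q r); auto. Qed.
Lemma invL p q r : D (mul r p) (mul r q) = D p q.
Proof. apply (Hinv p q r); auto. Qed.
Lemma massoc x y z : mul x (mul y z) = mul (mul x y) z.
Proof. destruct Hgrp as [_ [_ [H _]]]; auto. Qed.
Lemma mul_e_l x : mul e x = x.
Proof. destruct Hgrp as [_ [_ [_ [H _]]]]. apply H; auto. Qed.
Lemma mul_e_r x : mul x e = x.
Proof. destruct Hgrp as [_ [_ [_ [H _]]]]. apply H; auto. Qed.

Definition inv (x : G) := epsilon (inhabits e) (fun y => mul x y = e /\ mul y x = e).
Lemma inv_spec x : mul x (inv x) = e /\ mul (inv x) x = e.
Proof.
  unfold inv. apply epsilon_spec. destruct Hgrp as [_ [_ [_ [_ H]]]].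
  destruct (H x I) as [y [_ Hy]]. exists y; auto.
Qed.

Definition Cau (a : nat -> G) := CauP (fun n m => D (a n) (a m)).

Lemma Cau_const x : Cau (fun _ => x).
Proof. intros t eps Ht He. exists O. intros n m _ _. rewrite Dself. unfold H0. destruct (Rle_dec t 0); lra. Qed.

Lemma Cau_hc a nn mm : Cau a -> pairs nn mm -> hc (fun j => D (a (nn j)) (a (mm j))).
Proof. intros H Hp. exact (CauP_pairs _ H nn mm Hp). Qed.

Lemma pairs_sym nn mm : pairs nn mm -> pairs mm nn.
Proof. intros H j; destruct (H j); auto. Qed.

Lemma lim2_ex a b : Cau a -> Cau b -> exists F, Dplus F /\ wc (fun n => D (a n) (b n)) F.
Proof.
  intros Ha Hb. apply crit; [intro; apply DDp|]. apply (Q_of star Htri Hcont); [intro; apply DDp|].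
  intros nn mm Hp.
  exists (fun j => star (D (a (mm j)) (a (nn j))) (D (b (nn j)) (b (mm j)))).
  split; [intro; apply st_Dp; auto using DDp|]. split.
  - apply hc_star; auto using DDp.
    + apply Cau_hc; auto. apply pairs_sym; auto.
    + apply Cau_hc; auto.
  - intro j. set (n := nn j). set (m := mm j).
    rewrite <- st_assoc by auto using DDp. rewrite (st_comm star Htri (D (b n) (b m))) by auto using DDp.
    apply Dle_trans with (star (D (a m) (a n)) (D (a n) (b m))); [|apply Dtri].
    apply st_mono_r; auto using DDp, st_Dp. apply Dtri.
Qed.

Definition L2 (a b : nat -> G) : R -> R :=
  epsilon (inhabits H0) (fun F => Dplus F /\ wc (fun n => D (a n) (b n)) F).

Lemma L2_spec a b : Cau a -> Cau b -> Dplus (L2 a b) /\ wc (fun n => D (a n) (b n)) (L2 a b).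
Proof. intros. unfold L2. apply epsilon_spec. apply lim2_ex; auto. Qed.

Lemma L2_Dp a b : Cau a -> Cau b -> Dplus (L2 a b).
Proof. intros; apply L2_spec; auto. Qed.
Lemma L2_wc a b : Cau a -> Cau b -> wc (fun n => D (a n) (b n)) (L2 a b).
Proof. intros; apply L2_spec; auto. Qed.

Lemma L2_eq a b F : Cau a -> Cau b -> Dplus F -> wc (fun n => D (a n) (b n)) F -> L2 a b = F.
Proof. intros. apply (wc_unique (fun n => D (a n) (b n))); auto using L2_Dp, L2_wc. Qed.

Definition limf (a : nat -> G) (x : G) : R -> R := L2 a (fun _ => x).

Lemma limf_Dp a x : Cau a -> Dplus (limf a x).
Proof. intros; apply L2_Dp; auto using Cau_const. Qed.
Lemma limf_wc a x : Cau a -> wc (fun n => D (a n) x) (limf a x).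
Proof. intros; apply (L2_wc a (fun _ => x)); auto using Cau_const. Qed.

Lemma limf_lip a x y : Cau a -> Dle (star (D x y) (limf a y)) (limf a x).
Proof.
  intros Ha. apply (wc_le (fun n => star (D x y) (D (a n) y)) (fun n => D (a n) x)).
  - apply st_Dp; auto using DDp, limf_Dp.
  - apply star_wc; auto using DDp, limf_Dp, limf_wc. apply wc_const, DDp.
  - apply limf_wc; auto.
  - apply ev_all; intro n. rewrite st_comm by auto using DDp. rewrite (Dsym x y). apply Dtri.
Qed.

Lemma limf_Pi a : Cau a -> Pi D star (limf a).
Proof.
  intros Ha. split.
  - split; [intro; apply limf_Dp; auto|]. intros x y; apply limf_lip; auto.
  - exists a. split.
    + apply CauP_wconv2; auto. intros; apply DDp.
    + intro x. apply wc_wconv; auto using DDp, limf_Dp, limf_wc.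
Qed.

Lemma Pi_limf f : Pi D star f -> exists a, Cau a /\ f = limf a.
Proof.
  intros [[Hf _] [a [Hc Hw]]]. assert (Ha : Cau a) by (apply wconv2_CauP; auto).
  exists a. split; auto. apply functional_extensionality. intro x.
  apply (wc_unique (fun n => D (a n) x)); auto using limf_Dp, limf_wc.
  apply wconv_wc; auto using DDp.
Qed.

Lemma limf_seq a : Cau a -> hc (fun k => limf a (a k)).
Proof.
  intros Ha t eps Ht He. destruct (Ha (t/2) (eps/2) ltac:(lra) ltac:(lra)) as [N HN].
  exists N. intros k Hk. destruct (limf_wc a (a k) Ha) as [_ Hb].
  destruct (Hb (t/2) t (eps/2) ltac:(lra) ltac:(lra)) as [N' HN'].
  specialize (HN' (max N N') ltac:(lia)). specialize (HN (max N N') k ltac:(lia) Hk). lra.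
Qed.

Lemma DSup_eq S F : is_Dsup S F -> DSup S = F.
Proof.
  intros H. assert (H' : is_Dsup S (DSup S)) by (unfold DSup; apply epsilon_spec; exists F; auto).
  destruct H as [HF [Hu Hl]]. destruct H' as [HF' [Hu' Hl']].
  apply Dle_antisym; auto.
Qed.

Lemma bbD_lim a b : Cau a -> Cau b -> bbD star (limf a) (limf b) = L2 a b.
Proof.
  intros Ha Hb. unfold bbD. apply DSup_eq. split; [apply L2_Dp; auto|split].
  - intros H [x ->].
    apply (wc_le (fun n => star (D (a n) x) (D (b n) x)) (fun n => D (a n) (b n))).
    + apply st_Dp; auto using limf_Dp.
    + apply star_wc; auto using DDp, limf_Dp, limf_wc.
    + apply L2_wc; auto.
    + apply ev_all; intro n. rewrite (Dsym (b n) x). apply Dtri.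
  - intros F' HF' Hub.
    apply (wc_le (fun k => star (limf a (a k)) (star (D (a k) (b k)) (limf b (b k)))) (fun _ => F')).
    + apply L2_Dp; auto.
    + replace (L2 a b) with (star H0 (star (L2 a b) H0)).
      2:{ rewrite st_H0, st_H0l; auto using L2_Dp. }
      apply star_wc; auto using limf_Dp, st_Dp, DDp, H0_Dplus, L2_Dp.
      * apply hc_wc; auto using limf_Dp. apply limf_seq; auto.
      * apply star_wc; auto using limf_Dp, DDp, L2_Dp, H0_Dplus, L2_wc.
        apply hc_wc; auto using limf_Dp. apply limf_seq; auto.
    + apply wc_const; auto.
    + apply ev_all; intro k. apply Dle_trans with (star (limf a (a k)) (limf b (a k))).
      * apply st_mono_r; auto using st_Dp, DDp, limf_Dp. apply limf_lip; auto.
      * apply Hub. exists (a k); auto.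
Qed.

Lemma Cau_mul a b : Cau a -> Cau b -> Cau (fun n => mul (a n) (b n)).
Proof.
  intros Ha Hb. apply pairs_CauP. intros nn mm Hp.
  apply (hc_ge (fun j => star (D (a (nn j)) (a (mm j))) (D (b (nn j)) (b (mm j))))).
  - apply hc_star; auto using DDp, Cau_hc.
  - intro j. rewrite <- (invR (a (nn j)) (a (mm j)) (b (nn j))).
    rewrite <- (invL (b (nn j)) (b (mm j)) (a (mm j))). apply Dtri.
Qed.

Lemma mul_inv_x y x : mul y (mul (inv y) x) = x.
Proof. rewrite massoc, (proj1 (inv_spec y)), mul_e_l; auto. Qed.

Lemma odot_lim a b : Cau a -> Cau b ->
  odot mul star (limf a) (limf b) = limf (fun n => mul (a n) (b n)).
Proof.
  intros Ha Hb. pose proof (Cau_mul a b Ha Hb) as Hab.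
  apply functional_extensionality. intro x. unfold odot. apply DSup_eq.
  split; [apply limf_Dp; auto|split].
  - intros H [y [z [Hyz ->]]].
    apply (wc_le (fun n => star (D (a n) y) (D (b n) z)) (fun n => D (mul (a n) (b n)) x)).
    + apply st_Dp; auto using limf_Dp.
    + apply star_wc; auto using DDp, limf_Dp, limf_wc.
    + apply limf_wc; auto.
    + apply ev_all; intro n. rewrite <- (invR (a n) y z), Hyz.
      rewrite <- (invL (b n) z (a n)). rewrite st_comm by auto using DDp. apply Dtri.
  - intros F' HF' Hub.
    apply (wc_le (fun k => star (limf a (a k)) (star (D (mul (a k) (b k)) x) (limf b (b k)))) (fun _ => F')).
    + apply limf_Dp; auto.
    + replace (limf (fun n => mul (a n) (b n)) x) with
        (star H0 (star (limf (fun n => mul (a n) (b n)) x) H0)).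
      2:{ rewrite st_H0, st_H0l; auto using limf_Dp. }
      apply star_wc; auto using limf_Dp, st_Dp, DDp, H0_Dplus.
      * apply hc_wc; auto using limf_Dp. apply limf_seq; auto.
      * apply star_wc; auto using limf_Dp, DDp, H0_Dplus, limf_wc.
        apply hc_wc; auto using limf_Dp. apply limf_seq; auto.
    + apply wc_const; auto.
    + apply ev_all; intro k.
      apply Dle_trans with (star (limf a (a k)) (limf b (mul (inv (a k)) x))).
      * apply st_mono_r; auto using st_Dp, DDp, limf_Dp.
        apply Dle_trans with (star (D (mul (inv (a k)) x) (b k)) (limf b (b k))); [|apply limf_lip; auto].
        rewrite <- (invL (mul (inv (a k)) x) (b k) (a k)), mul_inv_x, Dsym. apply Dle_refl.
      * apply Hub. exists (a k), (mul (inv (a k)) x). split; auto. apply mul_inv_x.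
Qed.

Lemma delta_lim y : delta D y = limf (fun _ => y).
Proof.
  apply functional_extensionality. intro x. unfold delta, limf. symmetry.
  apply L2_eq; auto using Cau_const, DDp. rewrite Dsym. apply wc_const, DDp.
Qed.

Lemma L2_ext a b a' b' : Cau a -> Cau b -> Cau a' -> Cau b' ->
  (forall n, D (a n) (b n) = D (a' n) (b' n)) -> L2 a b = L2 a' b'.
Proof.
  intros. apply L2_eq; auto using L2_Dp. apply (wc_ext (fun n => D (a' n) (b' n))); auto.
  apply L2_wc; auto.
Qed.

Lemma L2_self a : Cau a -> L2 a a = H0.
Proof.
  intros. apply L2_eq; auto using H0_Dplus. apply (wc_ext (fun _ => H0)).
  - intro; rewrite Dself; auto.
  - apply wc_const, H0_Dplus.
Qed.

Lemma Dinv p q : D (inv p) (inv q) = D q p.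
Proof.
  rewrite <- (invL (inv p) (inv q) p), (proj1 (inv_spec p)).
  rewrite <- (invR e (mul p (inv q)) q), mul_e_l, <- massoc, (proj2 (inv_spec q)), mul_e_r.
  reflexivity.
Qed.

Lemma Cau_inv a : Cau a -> Cau (fun n => inv (a n)).
Proof.
  intros Ha t eps Ht He. destruct (Ha t eps Ht He) as [N HN]. exists N.
  intros n m Hn Hm. rewrite Dinv. apply HN; auto.
Qed.

Lemma L2_sym a b : Cau a -> Cau b -> L2 a b = L2 b a.
Proof. intros. apply L2_ext; auto. intro; apply Dsym. Qed.

Lemma L2_tri a b c : Cau a -> Cau b -> Cau c -> Dle (star (L2 a b) (L2 b c)) (L2 a c).
Proof.
  intros. apply (wc_le (fun n => star (D (a n) (b n)) (D (b n) (c n))) (fun n => D (a n) (c n))).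
  - apply st_Dp; auto using L2_Dp.
  - apply star_wc; auto using DDp, L2_Dp, L2_wc.
  - apply L2_wc; auto.
  - apply ev_all; intro; apply Dtri.
Qed.

Lemma L2_const p q : L2 (fun _ => p) (fun _ => q) = D p q.
Proof. apply L2_eq; auto using Cau_const, DDp. apply wc_const, DDp. Qed.

Lemma limf_eq a b : Cau a -> Cau b -> L2 a b = H0 -> limf a = limf b.
Proof.
  intros Ha Hb H. assert (H' : L2 b a = H0) by (rewrite L2_sym; auto).
  assert (Hgen : forall a b x, Cau a -> Cau b -> L2 a b = H0 -> Dle (limf b x) (limf a x)).
  { intros a' b' x Ha' Hb' HL.
    apply (wc_le (fun n => star (D (a' n) (b' n)) (D (b' n) x)) (fun n => D (a' n) x)).
    - apply limf_Dp; auto.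
    - replace (limf b' x) with (star (L2 a' b') (limf b' x)).
      2:{ rewrite HL, st_H0l; auto using limf_Dp. }
      apply star_wc; auto using DDp, L2_Dp, limf_Dp, L2_wc, limf_wc.
    - apply limf_wc; auto.
    - apply ev_all; intro; apply Dtri. }
  apply functional_extensionality; intro x. apply Dle_antisym; auto.
Qed.

Lemma bbD_Dp f g : Pi D star f -> Pi D star g -> Dplus (bbD star f g).
Proof.
  intros Hf Hg. destruct (Pi_limf f Hf) as [a [Ha ->]]. destruct (Pi_limf g Hg) as [b [Hb ->]].
  rewrite bbD_lim; auto. apply L2_Dp; auto.
Qed.

Lemma seq_eq (a b : nat -> G) : (forall n, a n = b n) -> a = b.
Proof. intros; apply functional_extensionality; auto. Qed.

Lemma main_sec :
    (forall f g, Pi D star f -> Pi D star g -> Pi D star (odot mul star f g)) /\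
    is_group_on (Pi D star) (odot mul star) (delta D e) /\
    is_PM_on (Pi D star) star (bbD star) /\
    is_invariant_on (Pi D star) (odot mul star) (bbD star) /\
    is_complete_on (Pi D star) (bbD star).
Proof.
  assert (Hcl : forall f g, Pi D star f -> Pi D star g -> Pi D star (odot mul star f g)).
  { intros f g Hf Hg. destruct (Pi_limf f Hf) as [a [Ha ->]]. destruct (Pi_limf g Hg) as [b [Hb ->]].
    rewrite odot_lim; auto. apply limf_Pi, Cau_mul; auto. }
  split; [exact Hcl|split; [|split; [|split]]].
  -
    split; [|split; [exact Hcl|split; [|split]]].
    + rewrite delta_lim. apply limf_Pi, Cau_const.
    + intros f g h Hf Hg Hh.
      destruct (Pi_limf f Hf) as [a [Ha ->]]. destruct (Pi_limf g Hg) as [b [Hb ->]].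
      destruct (Pi_limf h Hh) as [c [Hc ->]].
      rewrite (odot_lim b c), (odot_lim a (fun n => mul (b n) (c n))), (odot_lim a b),
        (odot_lim (fun n => mul (a n) (b n)) c); auto using Cau_mul.
      f_equal. apply seq_eq; intro; apply massoc.
    + intros f Hf. destruct (Pi_limf f Hf) as [a [Ha ->]]. rewrite delta_lim.
      rewrite !odot_lim; auto using Cau_const. split; f_equal; apply seq_eq; intro.
      apply mul_e_l. apply mul_e_r.
    + intros f Hf. destruct (Pi_limf f Hf) as [a [Ha ->]].
      exists (limf (fun n => inv (a n))). split; [apply limf_Pi, Cau_inv; auto|].
      rewrite delta_lim. rewrite !odot_lim; auto using Cau_inv. split; f_equal; apply seq_eq; intro.
      apply inv_spec. apply inv_spec.
  -
    split; [|split; [|split]].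
    + intros; apply bbD_Dp; auto.
    + intros f g Hf Hg. destruct (Pi_limf f Hf) as [a [Ha ->]]. destruct (Pi_limf g Hg) as [b [Hb ->]].
      rewrite bbD_lim; auto. split.
      * apply limf_eq; auto.
      * intro Heq. rewrite <- (bbD_lim a b), <- Heq, bbD_lim by auto. apply L2_self; auto.
    + intros f g Hf Hg. destruct (Pi_limf f Hf) as [a [Ha ->]]. destruct (Pi_limf g Hg) as [b [Hb ->]].
      rewrite !bbD_lim; auto. apply L2_sym; auto.
    + intros f g h Hf Hg Hh.
      destruct (Pi_limf f Hf) as [a [Ha ->]]. destruct (Pi_limf g Hg) as [b [Hb ->]].
      destruct (Pi_limf h Hh) as [c [Hc ->]].
      rewrite !bbD_lim; auto. apply L2_tri; auto.
  -
    intros f g h Hf Hg Hh.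
    destruct (Pi_limf f Hf) as [a [Ha ->]]. destruct (Pi_limf g Hg) as [b [Hb ->]].
    destruct (Pi_limf h Hh) as [c [Hc ->]].
    rewrite !odot_lim; auto. rewrite !bbD_lim; auto using Cau_mul.
    split; apply L2_ext; auto using Cau_mul; intro n. apply invR. apply invL.
  -
    intros z Hz HC.
    set (A := fun k => epsilon (inhabits (fun _ : nat => e)) (fun a => Cau a /\ z k = limf a)).
    assert (HA : forall k, Cau (A k) /\ z k = limf (A k)).
    { intro k. unfold A. apply epsilon_spec. apply Pi_limf; auto. }
    set (r := fun k : nat => / INR (S k)).
    assert (Hr : forall k, 0 < r k).
    { intro k. unfold r. apply Rinv_0_lt_compat, lt_0_INR. lia. }
    set (Nk := fun k => epsilon (inhabits 0%nat) (fun N => 1 - r k < limf (A k) (A k N) (r k))).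
    assert (HNk : forall k, 1 - r k < limf (A k) (A k (Nk k)) (r k)).
    { intro k. unfold Nk. apply (epsilon_spec (inhabits 0%nat) (fun N => 1 - r k < limf (A k) (A k N) (r k))).
      destruct (limf_seq (A k) (proj1 (HA k)) (r k) (r k) (Hr k) (Hr k)) as [N HN].
      exists N. apply HN; auto. }
    set (c := fun k => A k (Nk k)).
    assert (Hzc : hc (fun k => z k (c k))).
    { intros t eps Ht He. destruct (archimed_cor1 (Rmin t eps)) as [K [HK HK0]].
      { apply Rmin_glb_lt; auto. }
      exists K. intros k Hk.
      assert (Hrk : r k <= / INR K).
      { unfold r. apply Rinv_le_contravar; [apply lt_0_INR; auto|]. apply le_INR. lia. }
      pose proof (Rmin_l t eps); pose proof (Rmin_r t eps).
      destruct (HA k) as [HAk Ez]. rewrite Ez. unfold c.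
      specialize (HNk k).
      pose proof (Dp_nd _ (limf_Dp (A k) (A k (Nk k)) HAk) (r k) t ltac:(lra)). lra. }
    assert (HzD : forall k x, Dplus (z k x)).
    { intros k x. destruct (HA k) as [HAk ->]. apply limf_Dp; auto. }
    assert (HCP : CauP (fun n p => bbD star (z n) (z p))) by (apply wconv2_CauP; auto).
    assert (Hc : Cau c).
    { apply pairs_CauP. intros nn mm Hp.
      apply (hc_ge (fun j => star (z (nn j) (c (nn j)))
               (star (bbD star (z (nn j)) (z (mm j))) (z (mm j) (c (mm j)))))).
      - apply hc_star; auto.
        + intro; apply st_Dp; auto using bbD_Dp.
        + apply (hc_sub _ nn Hzc). intro j; apply Hp.
        + apply hc_star; auto using bbD_Dp.
          * apply (CauP_pairs _ HCP nn mm Hp).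
          * apply (hc_sub _ mm Hzc). intro j; apply Hp.
      - intro j. set (n := nn j). set (m := mm j).
        destruct (HA n) as [HAn En]. destruct (HA m) as [HAm Em].
        rewrite En, Em, bbD_lim; auto. rewrite <- L2_const.
        unfold limf. rewrite (L2_sym (A n) (fun _ => c n)); auto using Cau_const.
        apply Dle_trans with (star (L2 (fun _ => c n) (A n)) (L2 (A n) (fun _ => c m))).
        + apply st_mono_r; auto using L2_Dp, Cau_const, st_Dp. apply L2_tri; auto using Cau_const.
        + apply L2_tri; auto using Cau_const. }
    exists (limf c). split; [apply limf_Pi; auto|].
    assert (HbD : forall n, Dplus (bbD star (z n) (limf c))).
    { intro n. apply bbD_Dp; auto. apply limf_Pi; auto. }
    apply wc_wconv; auto using H0_Dplus. apply hc_wc; auto.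
    apply (hc_ge (fun n => star (z n (c n)) (limf c (c n)))).
    + apply hc_star; auto using limf_Dp. apply limf_seq; auto.
    + intro n. destruct (HA n) as [HAn En]. rewrite En, bbD_lim; auto. unfold limf.
      rewrite (L2_sym c (fun _ => c n)); auto using Cau_const. apply L2_tri; auto using Cau_const.
Qed.

End Grp.

Theorem mainTheorem12 :
  forall (G : Type) (mul : G -> G -> G) (e : G) (D : G -> G -> R -> R)
    (star : (R -> R) -> (R -> R) -> (R -> R)),
    is_triangle_function star ->
    continuous_tf star ->
    is_group_on (fun _ : G => True) mul e ->
    is_PM_on (fun _ : G => True) star D ->
    is_invariant_on (fun _ : G => True) mul D ->
    (forall f g, Pi D star f -> Pi D star g -> Pi D star (odot mul star f g)) /\
    is_group_on (Pi D star) (odot mul star) (delta D e) /\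
    is_PM_on (Pi D star) star (bbD star) /\
    is_invariant_on (Pi D star) (odot mul star) (bbD star) /\
    is_complete_on (Pi D star) (bbD star).
Proof.
  intros. apply main_sec; auto.
Qed.
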